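(* Let $X$ be a transitive BE-algebra, $k\in(-1,0]$, and $(X,f)$ an $([e],[e]\vee[c_k])$-ideal of $X$ such that $f(1)>\tfrac{-k-1}{2}$. Then $(X,f)$ is an $N$-ideal of $X$.
   Context: A BE-algebra is a set $X$ with a binary operation $*$ and a distinguished element $1$ such that for all $x,y,z\in X$: $x*x=1$, $x*1=1$, $1*x=x$, and $x*(y*z)=y*(x*z)$. Write $x\le y$ iff $x*y=1$. A BE-algebra is transitive if $y*z\le(x*y)*(x*z)$ for all $x,y,z\in X$. An ideal of $X$ is a nonempty subset $I\subseteq X$ such that $x*s\in I$ for all $x\in X$, $s\in I$, and $(s*(q*x))*x\in I$ for all $x\in X$ and $s,q\in I$. An $N$-structure on $X$ is a pair $(X,f)$ where $f:X\to[-1,0]$ is any function. For $t\in[-1,0]$ let $C(f;t)=\{x\in X: f(x)\le t\}$. The $N$-structure $(X,f)$ is an $N$-ideal of $X$ if for every $t\in[-1,0]$ the set $C(f;t)$ is either empty or an ideal of $X$. Fix $k\in(-1,0]$. For $x\in X$ and $t\in[-1,0)$, write $\frac{x}{t}[e]f$ if $f(x)\le t$, and $\frac{x}{t}[c_k]f$ if $f(x)+t+k+1<0$; write $\frac{x}{t}([e]\vee[c_k])f$ if at least one of these holds. The $N$-structure $(X,f)$ is an $([e],[e]\vee[c_k])$-ideal of $X$ if for all $x,y,z\in X$ and all $t,r\in[-1,0)$: (i) $f(y)\le t$ implies $\frac{x*y}{t}([e]\vee[c_k])f$; (ii) $f(x)\le t$ and $f(y)\le r$ together imply $\frac{(x*(y*z))*z}{\max\{t,r\}}([e]\vee[c_k])f$.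 *)

(* Defs.v *)
From Stdlib Require Import Reals.
Open Scope R_scope.

Section BE.
Context {X : Type} (op : X -> X -> X) (one : X).

Definition BE_algebra : Prop :=
  (forall x, op x x = one) /\
  (forall x, op x one = one) /\
  (forall x, op one x = x) /\
  (forall x y z, op x (op y z) = op y (op x z)).

Definition BE_le (x y : X) : Prop := op x y = one.

Definition BE_transitive : Prop :=
  forall x y z, BE_le (op y z) (op (op x y) (op x z)).

Definition BE_ideal (I : X -> Prop) : Prop :=
  (exists s, I s) /\
  (forall x s, I s -> I (op x s)) /\
  (forall x s q, I s -> I q -> I (op (op s (op q x)) x)).

Definition N_structure (f : X -> R) : Prop := forall x, -1 <= f x <= 0.

Definition C_set (f : X -> R) (t : R) : X -> Prop := fun x => f x <= t.

Definition N_ideal (f : X -> R) : Prop :=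
  forall t, -1 <= t <= 0 ->
    (forall x, ~ C_set f t x) \/ BE_ideal (C_set f t).

Definition pt_e (f : X -> R) (x : X) (t : R) : Prop := f x <= t.
Definition pt_ck (k : R) (f : X -> R) (x : X) (t : R) : Prop := f x + t + k + 1 < 0.
Definition pt_e_or_ck (k : R) (f : X -> R) (x : X) (t : R) : Prop :=
  pt_e f x t \/ pt_ck k f x t.

Definition e_eck_ideal (k : R) (f : X -> R) : Prop :=
  (forall x y t, -1 <= t < 0 -> f y <= t -> pt_e_or_ck k f (op x y) t) /\
  (forall x y z t r, -1 <= t < 0 -> -1 <= r < 0 -> f x <= t -> f y <= r ->
     pt_e_or_ck k f (op (op x (op y z)) z) (Rmax t r)).
End BE.

(* Main.v *)
Require Import Defs.
From Stdlib Require Import Reals Lra Classical.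
Open Scope R_scope.

Theorem mainTheorem10 (X : Type) (op : X -> X -> X) (one : X)
  (HBE : BE_algebra op one) (Htr : BE_transitive op one)
  (k : R) (Hk : -1 < k <= 0)
  (f : X -> R) (Hf : N_structure f)
  (Hid : e_eck_ideal op k f)
  (H1 : f one > (- k - 1) / 2) :
  N_ideal op f.
Proof.
  destruct HBE as [Hxx _].
  destruct Hid as [Hi Hii].
  unfold N_structure in Hf.
  unfold pt_e_or_ck, pt_e, pt_ck in *.
  intros t Ht.
  destruct (classic (exists s, C_set f t s)) as [[s Hs]|Hn].
  2:{ left. intros x Hx. apply Hn. exists x. exact Hx. }
  right. unfold C_set in *.
  destruct (Req_dec t 0) as [H0|H0].
  { subst t. split; [exists s; exact Hs|].
    split; intros; apply Hf. }
  assert (Htl : t < 0) by lra.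
  assert (Hone : f one <= t).
  { destruct (Rle_dec (f one) t) as [h|h]; [exact h|].
    exfalso.
    set (t' := Rmax t (- k - 1 - f one)).
    assert (A1 : t <= t') by apply Rmax_l.
    assert (A2 : - k - 1 - f one <= t') by apply Rmax_r.
    assert (A3 : t' < f one).
    { unfold t', Rmax; destruct (Rle_dec t (- k - 1 - f one)); lra. }
    pose proof (Hf one).
    pose proof (Hi s s t' ltac:(lra) ltac:(lra)) as HH.
    rewrite Hxx in HH. lra. }
  assert (key : forall z, f z <= t \/ f z + t + k + 1 < 0 -> f z <= t).
  { intros z [h|h]; lra. }
  split; [exists s; exact Hs|]. split.
  - intros x y Hy. apply key. apply Hi; lra.
  - intros x s1 q Hs1 Hq. apply key.
    pose proof (Hii s1 q x t t ltac:(lra) ltac:(lra) Hs1 Hq) as HH.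
    rewrite Rmax_left in HH by lra. exact HH.
Qed.
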